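(* Let $G$ be a graph of girth at least five and maximum average degree $d\ge2$. Every fractional $2$-guidance system and every weak $2$-guidance system of $G$ has maximum outdegree at least $d/2$.
   Context: All graphs are finite, simple and undirected. The maximum average degree of $G$ is the maximum average degree of its subgraphs. For $u,v$ at distance $\ell$, $\Gamma_G(u,v)$ is the set of neighbors of $u$ at distance $\ell-1$ from $v$. A partial orientation of $G$ is a directed graph $\vec{H}$ on $V(G)$ with every $(u,v)\in E(\vec{H})$ satisfying $uv\in E(G)$. $B_{\vec{H}}(v,a)$ is the set of vertices reachable from $v$ by a directed path of length at most $a$. A weak $r$-guidance system is a partial orientation $\vec{H}$ such that for any distinct $u,v$ at distance $\ell\le r$ there exist non-negative integers $a,b$ with $a+b=\ell-1$ such that $G$ has an edge between $B_{\vec{H}}(u,a)$ and $B_{\vec{H}}(v,b)$. A fractional orientation assigns a non-negative real $p(u,v)$ to each ordered pair of adjacent vertices; its maximum outdegree is $\max_u\sum_{v:uv\in E(G)}p(u,v)$. A fractional $r$-guidance system is a fractional orientation with $\sum_{y\in\Gamma_G(u,v)}p(u,y)+\sum_{y\in\Gamma_G(v,u)}p(v,y)\ge1$ for all $u,v$ at distance between $2$ and $r$. *)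

(* Defs.v *)
(* Simple graph: symmetric irreflexive relation e on a finType T. *)
From mathcomp Require Import all_boot all_order all_algebra.
Set Implicit Arguments. Unset Strict Implicit. Unset Printing Implicit Defensive.
Import Order.TTheory GRing.Theory Num.Theory.
Local Open Scope ring_scope.

Section Graphs.
Variable T : finType.

Definition is_walk (e : rel T) (u v : T) (n : nat) : bool :=
  [exists t : n.-tuple T, path e u t && (last u t == v)].

Definition dist_eq (e : rel T) (u v : T) (l : nat) : bool :=
  is_walk e u v l && [forall m : 'I_l, ~~ is_walk e u v m].

Definition girth_ge (e : rel T) (g : nat) : Prop :=
  forall c : seq T, ucycle e c -> (3 <= size c)%N -> (g <= size c)%N.

Definition is_subgraph (e : rel T) (S : {set T}) (f : rel T) : Prop :=
  symmetric f /\ forall x y, f x y -> [&& e x y, x \in S & y \in S].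

Definition avg_deg (R : numFieldType) (S : {set T}) (f : rel T) : R :=
  (\sum_(x in S) #|[set y | f x y]|)%:R / #|S|%:R.

Definition is_mad (R : numFieldType) (e : rel T) (d : R) : Prop :=
  (exists S f, S != set0 /\ is_subgraph e S f /\ avg_deg R S f = d) /\
  (forall S f, S != set0 -> is_subgraph e S f -> avg_deg R S f <= d).

Definition Gamma (e : rel T) (l : nat) (u v : T) : {set T} :=
  [set y | e u y & dist_eq e y v l.-1].

Definition partial_orientation (e : rel T) (h : rel T) : Prop :=
  forall u v, h u v -> e u v.

Definition outdeg (h : rel T) (u : T) : nat := #|[set v | h u v]|.
Definition max_outdeg (h : rel T) : nat := \max_(u : T) outdeg h u.

Definition Ball (h : rel T) (v : T) (a : nat) : {set T} :=
  [set w | [exists k : 'I_a.+1, is_walk h v w k]].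

Definition weak_guidance (e : rel T) (r : nat) (h : rel T) : Prop :=
  forall u v l, u != v -> dist_eq e u v l -> (l <= r)%N ->
    exists a b, (a + b = l.-1)%N /\
      exists x y, [/\ x \in Ball h u a, y \in Ball h v b & e x y].

Definition frac_orientation (R : numDomainType) (e : rel T) (p : T -> T -> R) : Prop :=
  forall u v, e u v -> 0 <= p u v.

Definition frac_outdeg (R : numDomainType) (e : rel T) (p : T -> T -> R) (u : T) : R :=
  \sum_(v | e u v) p u v.

Definition frac_max_outdeg (R : realDomainType) (e : rel T) (p : T -> T -> R) : R :=
  \big[Num.max/0]_(u : T) frac_outdeg e p u.

Definition frac_guidance (R : numDomainType) (e : rel T) (r : nat) (p : T -> T -> R) : Prop :=
  forall u v l, dist_eq e u v l -> (2 <= l)%N -> (l <= r)%N ->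
    1 <= \sum_(y in Gamma e l u v) p u y + \sum_(y in Gamma e l v u) p v y.

End Graphs.

(* Main.v *)
Require Import Defs.
From mathcomp Require Import all_boot all_order all_algebra.
From mathcomp Require Import ring lra zify.
Import Order.TTheory GRing.Theory Num.Theory.
Local Open Scope ring_scope.

Lemma walk0 (T : finType) (e : rel T) u v : is_walk e u v 0 = (u == v).
Proof.
apply/existsP/idP => [[t]|/eqP<-]; last by exists [tuple]; rewrite /= eqxx.
by rewrite tuple0 /= => /eqP->.
Qed.

Lemma walk1 (T : finType) (e : rel T) u v : is_walk e u v 1 = e u v.
Proof.
apply/existsP/idP => [[t]|H]; last by exists [tuple v]; rewrite /= H eqxx.
case: t => [[|x [|y s]] //= _]; by rewrite andbT => /andP[H /eqP <-].
Qed.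

Lemma walk2 (T : finType) (e : rel T) u y v : e u y -> e y v -> is_walk e u v 2.
Proof. by move=> H1 H2; apply/existsP; exists [tuple y; v]; rewrite /= H1 H2 eqxx. Qed.

Lemma common_uniq (T : finType) (e : rel T) u v y w :
  symmetric e -> irreflexive e -> girth_ge e 5 ->
  e y u -> e y v -> e w u -> e w v -> u != v -> w = y.
Proof.
move=> es ei g yu yv wu wv uv; apply/eqP; apply/negPn/negP => wy.
have ne : forall a b, e a b -> a != b.
  by move=> a b H; apply/eqP => E; move: H; rewrite E ei.
have := g [:: u; y; v; w]; rewrite /ucycle /= !inE.
rewrite es yu yv es wv wu /= !negb_or uv.
rewrite [u == y]eq_sym [u == w]eq_sym [v == w]eq_sym (ne _ _ yu) (ne _ _ yv) (ne _ _ wu) (ne _ _ wv) [y == w]eq_sym wy /=.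
by move=> /(_ isT isT).
Qed.

Lemma notadj (T : finType) (e : rel T) u v y :
  symmetric e -> irreflexive e -> girth_ge e 5 ->
  e y u -> e y v -> u != v -> ~~ e u v.
Proof.
move=> es ei g yu yv uv; apply/negP => H.
have ne : forall a b, e a b -> a != b.
  by move=> a b H'; apply/eqP => E; move: H'; rewrite E ei.
have := g [:: u; y; v]; rewrite /ucycle /= !inE.
rewrite es yu yv es H /= !negb_or uv [u == y]eq_sym (ne _ _ yu) (ne _ _ yv) /=.
by move=> /(_ isT isT).
Qed.

Lemma dist2 (T : finType) (e : rel T) u v y :
  symmetric e -> irreflexive e -> girth_ge e 5 ->
  e y u -> e y v -> u != v -> dist_eq e u v 2.
Proof.
move=> es ei g yu yv uv; rewrite /dist_eq (@walk2 _ e u y v) ?(es u) //=.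
apply/forallP => -[[|[|m]] Hm] //=; first by rewrite walk0.
by rewrite walk1 (@notadj _ e u v y es ei g yu yv uv).
Qed.
Lemma pervertex (R : realFieldType) (T : finType) (N : {set T}) (a : T -> R) :
  (forall u v, u \in N -> v \in N -> u != v -> 1 <= a u + a v) ->
  (2 <= #|N|)%N -> #|N|%:R <= 2 * \sum_(u in N) a u.
Proof.
move=> H k2.
set k : R := #|N|%:R; set A := \sum_(u in N) a u.
have key : \sum_(u in N) (k - 1) <= \sum_(u in N) ((\sum_(v in N) (a u + a v)) - 2 * a u).
  apply: ler_sum => u uN.
  rewrite (bigD1 u uN) /= addrAC -mulr2n mulr_natl subrr add0r.
  have -> : k - 1 = \sum_(v in N | v != u) 1.
    rewrite sumr_const /k (cardD1 u N) uN natrD addrAC subrr add0r.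
    congr (_%:R); apply: eq_card => v; rewrite !inE andbC.
    by [].
  apply: ler_sum => v /andP [vN vu]; apply: H => //; by rewrite eq_sym.
move: key; rewrite sumr_const sumrB.
rewrite (eq_bigr (fun i => a i *+ #|N| + A)); last by move=> i _; rewrite big_split /= sumr_const.
rewrite big_split /= sumrMnl sumr_const -mulr_sumr -/A -[(k - 1) *+ _]mulr_natr -[A *+ #|N|]mulr_natr -/k.
have k2' : 2 <= k by rewrite /k (ler_nat R 2).
move=> key.
have h : 0 <= (k - 1) * (2 * A - k) by lra.
rewrite pmulr_rge0 ?subr_ge0 in h => //; lra.
Qed.
Lemma sum_nbr (R : realFieldType) (T : finType) (S : {set T}) (f : rel T) (F : T -> R) y :
  (forall a b, f a b -> b \in S) ->
  \sum_(u in [set u | f y u]) F u = \sum_(u in S) (if f y u then F u else 0).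
Proof.
move=> Hs; rewrite big_mkcond [RHS]big_mkcond; apply: eq_bigr => u _.
rewrite inE; case fyu: (f y u); [by rewrite (Hs _ _ fyu) | by case: (u \in S)].
Qed.

Lemma core_ind (R : realFieldType) (T : finType) (e : rel T) (q : T -> T -> R) (d : R) :
  2 <= d -> (forall u v, e u v -> 0 <= q u v) ->
  (forall y u v, e y u -> e y v -> u != v -> 1 <= q u y + q v y) ->
  (forall u, \sum_(w | e u w) q u w < d / 2) ->
  forall n (S : {set T}) (f : rel T), #|S| = n -> is_subgraph e S f -> (0 < #|S|)%N ->
  d * #|S|%:R <= (\sum_(x in S) #|[set y | f x y]|)%:R -> False.
Proof.
move=> d2 qpos qcov small.
elim/ltn_ind => n IH S f Hn [fsym fsub] Spos Hd.
have fS : forall a b, f a b -> b \in S by move=> a b /fsub /and3P[].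
case: (boolP [exists x in S, #|[set y | f x y]| <= 1]%N).
- case/existsP => x /andP [xS degx].
  set S' := S :\ x.
  set f' := fun a b => [&& f a b, a != x & b != x].
  have cardS : #|S| = #|S'|.+1 by rewrite (cardsD1 x S) xS.
  have decomp : (\sum_(a in S) #|[set y | f a y]| = #|[set y | f x y]|
       + \sum_(a in S') #|[set y | f' a y]| + \sum_(a in S') (f a x : nat))%N.
    rewrite (bigD1 x xS) /= -addnA; congr (_ + _)%N; rewrite -big_split /=.
    apply: eq_big => [a|a]; first by rewrite in_setD1 andbC.
    case/andP => aS ax; rewrite (cardD1 x) inE addnC; congr (_ + _)%N.
    apply: eq_card => b; rewrite !inE /f' ax /=.
    by rewrite andbC.
  have cbound : (\sum_(a in S') (f a x : nat) <= #|[set y | f x y]|)%N.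
    rewrite -sum1_card big_mkcond [X in (_ <= X)%N]big_mkcond /=.
    apply: leq_sum => a _; rewrite inE fsym; by case: (a \in S'); case: (f x a).
  case: (posnP #|S'|) => [S'0|S'pos].
    move/eqP: S'0; rewrite cards_eq0 => /eqP S'0.
    move: decomp Hd; rewrite S'0 !big_set0 !addn0 => ->.
    rewrite cardS S'0 cards0 mulr1 => H.
    have : (#|[set y | f x y]|%:R : R) <= 1 by rewrite (ler_nat R _ 1).
    lra.
  apply: (IH #|S'| _ S' f' erefl) => //.
  + by rewrite -Hn cardS.
  + split.
      by move=> a b; rewrite /f' fsym; case: (f b a); case: (a != x); case: (b != x).
    move=> a b /and3P [fab ax bx]; move: (fsub _ _ fab) => /and3P [-> aS bS].
    by rewrite !in_setD1 ax bx aS bS.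
  + have H1 : ((\sum_(a in S) #|[set y | f a y]|)%:R : R) <=
          (\sum_(a in S') #|[set y | f' a y]|)%:R + 2.
      rewrite -(natrD R _ 2) ler_nat decomp; lia.
    move: Hd; rewrite cardS -addn1 natrD mulrDr mulr1; lra.
- move/existsPn => deg2.
  have inb : forall y, y \in S ->
      (#|[set u | f y u]|%:R : R) <= 2 * \sum_(u in [set u | f y u]) q u y.
    move=> y yS; apply: pervertex.
      move=> u v; rewrite !inE => fyu fyv uv; apply: qcov => //.
        by case/and3P: (fsub _ _ fyu).
      by case/and3P: (fsub _ _ fyv).
    by have := deg2 y; rewrite yS /= -ltnNge.
  have E1 : ((\sum_(x in S) #|[set y | f x y]|)%:R : R) <=
      2 * \sum_(y in S) \sum_(u in [set u | f y u]) q u y.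
    by rewrite natr_sum mulr_sumr; apply: ler_sum.
  have E2 : \sum_(y in S) \sum_(u in [set u | f y u]) q u y =
            \sum_(u in S) \sum_(y in [set y | f u y]) q u y.
    under eq_bigr => y _ do rewrite (@sum_nbr R T S f (fun u => q u y) y fS).
    rewrite exchange_big; apply: eq_bigr => u uS.
    rewrite (@sum_nbr R T S f (fun y => q u y) u fS); apply: eq_bigr => y _.
    by rewrite fsym.
  have E3 : \sum_(u in S) \sum_(y in [set y | f u y]) q u y <=
            \sum_(u in S) \sum_(w | e u w) q u w.
    apply: ler_sum => u uS; rewrite big_mkcond [X in _ <= X]big_mkcond.
    apply: ler_sum => y _; rewrite inE; case fuy: (f u y).
      by case/and3P: (fsub _ _ fuy) => ->.
    by case euy: (e u y) => //; apply: qpos.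
  have E4 : \sum_(u in S) \sum_(w | e u w) q u w < \sum_(u in S) (d / 2).
    apply: ltr_sum => [|u _]; last exact: small.
    have : S != set0 by rewrite -card_gt0.
    case/set0Pn => x xS.
    by apply/hasP; exists x; rewrite ?mem_index_enum.
  move: E4; rewrite sumr_const -mulr_natr => E4.
  have : d * #|S|%:R = 2 * (d / 2 * #|S|%:R) by rewrite mulrA mulrCA divff ?mulr1 // pnatr_eq0.
  lra.
Qed.

Lemma ball0 (T : finType) (h : rel T) u x : x \in Ball h u 0 -> x = u.
Proof. by rewrite inE => /existsP [[[|k] Hk]] //; rewrite walk0 => /eqP. Qed.

Lemma ball1 (T : finType) (h : rel T) u x : x \in Ball h u 1 -> x = u \/ h u x.
Proof.
rewrite inE => /existsP [[[|[|k]] Hk]] //=; first by rewrite walk0 => /eqP; left.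
by rewrite walk1; right.
Qed.

Theorem lemma29 (R : realFieldType) (T : finType) (e : rel T) (d : R) :
  symmetric e -> irreflexive e -> girth_ge e 5 -> is_mad e d -> 2 <= d ->
  (forall p : T -> T -> R, frac_orientation e p -> frac_guidance e 2 p ->
     d / 2 <= frac_max_outdeg e p) /\
  (forall h : rel T, partial_orientation e h -> weak_guidance e 2 h ->
     d / 2 <= (max_outdeg h)%:R).
Proof.
move=> es ei g [[S [f [Sn0 [Hsub Havg]]]] _] d2.
have ne : forall a b, e a b -> a != b.
  by move=> a b H'; apply/eqP => E; move: H'; rewrite E ei.
have Spos : (0 < #|S|)%N by rewrite card_gt0.
have Hd : d * #|S|%:R <= (\sum_(x in S) #|[set y | f x y]|)%:R.
  by rewrite -Havg /avg_deg divfK // pnatr_eq0 -lt0n.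
have core : forall q : T -> T -> R, (forall u v, e u v -> 0 <= q u v) ->
   (forall y u v, e y u -> e y v -> u != v -> 1 <= q u y + q v y) ->
   exists u, d / 2 <= \sum_(w | e u w) q u w.
  move=> q qpos qcov.
  case: (boolP [exists u, d / 2 <= \sum_(w | e u w) q u w]) => [/existsP//|/existsPn H].
  exfalso; apply: (@core_ind R T e q d d2 qpos qcov _ #|S| S f erefl Hsub Spos Hd).
  by move=> u; rewrite ltNge H.
split.
- move=> p pp pg.
  have Gam : forall a b y, e y a -> e y b -> a != b -> Gamma e 2 a b = [set y].
    move=> a b y ya yb ab; apply/setP => z; rewrite !inE /=.
    apply/andP/eqP => [[az /andP [w1 _]]|->].
      rewrite walk1 in w1.
      exact: (@common_uniq _ e a b y z es ei g ya yb ltac:(by rewrite es) w1 ab).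
    split; first by rewrite es.
    rewrite /dist_eq walk1 yb /=; apply/forallP => -[[|m] Hm] //=.
    by rewrite walk0 (ne _ _ yb).
  have qcov : forall y u v, e y u -> e y v -> u != v -> 1 <= p u y + p v y.
    move=> y u v yu yv uv.
    have := pg u v 2 (@dist2 _ e u v y es ei g yu yv uv) isT isT.
    by rewrite (Gam u v y) // (Gam v u y) 1?eq_sym // !big_set1.
  have [u Hu] := core p pp qcov.
  exact: le_trans Hu (le_bigmax _ _ u).
- move=> h hpo hwg.
  have qcov : forall y u v, e y u -> e y v -> u != v ->
      1 <= (h u y : nat)%:R + (h v y : nat)%:R :> R.
    move=> y u v yu yv uv /=.
    case huy: (h u y); first by rewrite /= lerDl ler0n.
    case hvy: (h v y); first by rewrite /= lerDr ler0n.
    exfalso.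
    have [a [b [ab [x [z [xB zB exz]]]]]] :=
      hwg u v 2 uv (@dist2 _ e u v y es ei g yu yv uv) isT.
    have nuv := @notadj _ e u v y es ei g yu yv uv.
    case: a ab xB => [|[|a]] //=.
      move=> b1; have bb : b = 1%N by lia.
      subst b.
      move=> /ball0 xu; subst x.
      case: (@ball1 _ _ _ _ zB) => [zv|hvz]; first by subst z; rewrite exz in nuv.
      have evz := hpo _ _ hvz.
      have zy := @common_uniq _ e u v y z es ei g yu yv ltac:(by rewrite es) ltac:(by rewrite es) uv.
      by subst z; rewrite hvz in hvy.
    move=> b0; have bb : b = 0%N by lia.
    subst b.
    move=> /ball1 xB'; move: zB => /ball0 zv; subst z.
    case: xB' => [xu|hux]; first by subst x; rewrite exz in nuv.
    have eux := hpo _ _ hux.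
    have xy := @common_uniq _ e u v y x es ei g yu yv ltac:(by rewrite es) exz uv.
    by subst x; rewrite hux in huy.
  have [u Hu] := core (fun a b => (h a b : nat)%:R) (fun _ _ _ => ler0n _ _) qcov.
  apply: (le_trans Hu); rewrite -natr_sum ler_nat.
  have -> : (\sum_(w | e u w) (h u w : nat))%N = outdeg h u.
    rewrite /outdeg -sum1_card big_mkcond [RHS]big_mkcond; apply: eq_bigr => w _.
    rewrite inE; case huw: (h u w); first by rewrite (hpo _ _ huw).
    by case: (e u w).
  exact: leq_bigmax.
Qed.
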